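(* Let $C$ and $E$ be finite non-empty constraints on the same sequence of variables with $C\subseteq E$, and let $\mathcal R$ be a set of rules of the form $\mathbf A\to\mathbf B$ involving only these variables. Then $C$ is closed under all rules of $\mathcal R$ that are valid for $E$ if and only if $C$ is closed under all minimal valid rules in $\mathcal R$ for $E$.
   Context: A constraint on variables $x_1,\dots,x_n$ with domains $D_1,\dots,D_n$ is a subset of $D_1\times\dots\times D_n$; for a tuple $d$ and variable $x$, $d[x]$ is the corresponding component. Atomic formulas are $x=a$, $x\neq a$, $x\in S$; $\models_d x=a$ iff $d[x]=a$, $\models_d x\neq a$ iff $d[x]\neq a$, $\models_d x\in S$ iff $d[x]\in S$; for a sequence $\mathbf A$ of atomic formulas, $\models_d\mathbf A$ iff $d$ satisfies each of them. A rule is $\mathbf A\to\mathbf B$ with $\mathbf A,\mathbf B$ finite sequences of atomic formulas. For a constraint $C$: - $\mathbf A\to\mathbf B$ is valid for $C$ if for all $d\in C$, $\models_d\mathbf A$ implies $\models_d\mathbf B$; - $C$ is closed under $\mathbf A\to\mathbf B$ if ($\models_d\mathbf A$ for all $d\in C$) implies ($\models_d\mathbf B$ for all $d\in C$); - $\mathbf A\to\mathbf B$ is feasible for $C$ if $\models_d\mathbf A$ for some $d\in C$; - $\mathbf A\to\mathbf B$ extends $\mathbf A'\to\mathbf B$ (same conclusion) if $\mathbf A$ contains all variables occurring in $\mathbf A'$ and for all $d\in C$, $\models_d\mathbf A$ implies $\models_d\mathbf A'$; $r$ properly extends $r'$ if $r$ extends $r'$ but $r'$ does not extend $r$; - given a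 set of rules $\mathcal R$, a rule is minimal in $\mathcal R$ (for $C$) if it is feasible for $C$ and does not properly extend a rule of $\mathcal R$ valid for $C$. *)

(* Defs.v *)
From mathcomp Require Import all_boot.
From Stdlib Require Import List.
Set Implicit Arguments. Unset Strict Implicit. Unset Printing Implicit Defensive.

Section Rules.
Variable n : nat.
Variable D : 'I_n -> Type.

Definition tuple_t := forall i : 'I_n, D i.

Definition constraint := tuple_t -> Prop.

Definition finite_constraint (C : constraint) : Prop :=
  exists l : list tuple_t, forall d, C d <-> List.In d l.

Definition nonempty_constraint (C : constraint) : Prop := exists d, C d.

Definition subconstraint (C E : constraint) : Prop := forall d, C d -> E d.

Inductive atom : Type :=
| AEq  (i : 'I_n) (a : D i)
| ANeq (i : 'I_n) (a : D i)
| AIn  (i : 'I_n) (s : D i -> Prop).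

Definition atom_var (f : atom) : 'I_n :=
  match f with AEq i _ => i | ANeq i _ => i | AIn i _ => i end.

Definition sat_atom (d : tuple_t) (f : atom) : Prop :=
  match f with
  | AEq i a => d i = a
  | ANeq i a => d i <> a
  | AIn i s => s (d i)
  end.

Definition sat (d : tuple_t) (A : list atom) : Prop :=
  forall f, List.In f A -> sat_atom d f.

Record rule : Type := Rule { premise : list atom; conclusion : list atom }.

Definition occurs (i : 'I_n) (A : list atom) : Prop :=
  exists f, List.In f A /\ atom_var f = i.

Definition valid (C : constraint) (r : rule) : Prop :=
  forall d, C d -> sat d (premise r) -> sat d (conclusion r).

Definition closed_under (C : constraint) (r : rule) : Prop :=
  (forall d, C d -> sat d (premise r)) -> (forall d, C d -> sat d (conclusion r)).

Definition feasible (C : constraint) (r : rule) : Prop :=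
  exists d, C d /\ sat d (premise r).

Definition extends (C : constraint) (r r' : rule) : Prop :=
  conclusion r = conclusion r' /\
  (forall i, occurs i (premise r') -> occurs i (premise r)) /\
  (forall d, C d -> sat d (premise r) -> sat d (premise r')).

Definition properly_extends (C : constraint) (r r' : rule) : Prop :=
  extends C r r' /\ ~ extends C r' r.

Definition minimal (C : constraint) (R : rule -> Prop) (r : rule) : Prop :=
  feasible C r /\
  ~ (exists r', R r' /\ valid C r' /\ properly_extends C r r').

End Rules.

(* Main.v *)
Require Import Defs.
From Stdlib Require Import List Classical ClassicalEpsilon.
From mathcomp Require Import all_boot.

Definition pb (P : Prop) : bool :=
  if excluded_middle_informative P then true else false.

Lemma pbP (P : Prop) : pb P = true <-> P.
Proof. rewrite /pb; case: excluded_middle_informative => //; split=> //. Qed.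

Lemma pbF (P : Prop) : pb P = false <-> ~ P.
Proof. rewrite /pb; case: excluded_middle_informative => //; split=> //. Qed.

Lemma count_le_In (T : Type) (a b : pred T) (s : seq T) :
  (forall x, List.In x s -> a x -> b x) -> count a s <= count b s.
Proof.
elim: s => //= x s IH H.
have IH' := IH (fun y Hy => H y (or_intror Hy)).
case Ha: (a x); first by rewrite (H x (or_introl erefl) Ha) /= ltnS.
case: (b x) => /=; [exact: leqW | exact: IH'].
Qed.

Lemma count_lt_In (T : Type) (a b : pred T) (s : seq T) :
  (forall x, List.In x s -> a x -> b x) ->
  (exists x, List.In x s /\ b x /\ ~~ a x) -> count a s < count b s.
Proof.
elim: s => [|x s IH] H [y [Hy [Hb Ha]]] //=.
have Hs : forall z, List.In z s -> a z -> b z by move=> z Hz; apply: H; right.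
move: Hb Ha; case: Hy => [->|Hy] Hb Ha.
  rewrite Hb (negbTE Ha) /= add0n add1n ltnS; exact: count_le_In.
have := IH Hs (ex_intro _ y (conj Hy (conj Hb Ha))).
case Hax: (a x); first by rewrite (H x (or_introl erefl) Hax).
by case: (b x) => /= h //; apply: ltnW; rewrite add1n add0n ltnS.
Qed.

Lemma mem_In (T : eqType) (x : T) (s : seq T) : x \in s -> List.In x s.
Proof.
elim: s => //= y s IH; rewrite in_cons => /orP [/eqP ->|h]; [by left|by right; auto].
Qed.

Section Main.
Variables (n : nat) (D : 'I_n -> Type) (C E : constraint D) (R : rule D -> Prop).
Variable lE : seq (tuple_t D).
Hypothesis HlE : forall d, E d <-> List.In d lE.

Definition meas (r : rule D) : nat :=
  count (fun i => pb (occurs i (premise r))) (enum 'I_n) +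
  count (fun d => ~~ pb (sat d (premise r))) lE.

Lemma meas_lt r r' : properly_extends E r r' -> meas r' < meas r.
Proof.
move=> [[Hc [Hv Hs]] Hne].
have L1 : count (fun i => pb (occurs i (premise r'))) (enum 'I_n) <=
          count (fun i => pb (occurs i (premise r))) (enum 'I_n).
  apply: count_le_In => i _ /pbP h; apply/pbP; auto.
have L2 : count (fun d => ~~ pb (sat d (premise r'))) lE <=
          count (fun d => ~~ pb (sat d (premise r))) lE.
  apply: count_le_In => d Hd; apply: contra => /pbP h; apply/pbP.
  apply: Hs => //; exact/HlE.
have [[i [Hi Hi']] | [d [Ed [S1 S2]]]] :
  (exists i, occurs i (premise r) /\ ~ occurs i (premise r')) \/
  (exists d, E d /\ sat d (premise r') /\ ~ sat d (premise r)).
  apply: NNPP => Hn; apply: Hne; split; first by [].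
  split.
  - move=> i Hi; apply: NNPP => Hi'; apply: Hn; left; eauto.
  - move=> d Ed S; apply: NNPP => S'; apply: Hn; right; eauto.
- rewrite /meas; apply: leq_ltn_trans (leq_add (leqnn _) L2) _.
  rewrite ltn_add2r; apply: count_lt_In.
    move=> j _ /pbP h; apply/pbP; auto.
  exists i; split; first by apply: mem_In; rewrite mem_enum.
  split; first exact/pbP.
  by apply/negP => /pbP.
- rewrite /meas; apply: leq_ltn_trans (leq_add L1 (leqnn _)) _.
  rewrite ltn_add2l; apply: count_lt_In.
    move=> x Hx; apply: contra => /pbP h; apply/pbP; apply: Hs => //; exact/HlE.
  exists d; split; first exact/HlE.
  split; first by apply/negP => /pbP.
  by rewrite negbK; apply/pbP.
Qed.

End Main.

Theorem mainTheorem2 (n : nat) (D : 'I_n -> Type)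
  (C E : constraint D) (R : rule D -> Prop) :
  finite_constraint C -> nonempty_constraint C ->
  finite_constraint E -> nonempty_constraint E ->
  subconstraint C E ->
  ((forall r, R r -> valid E r -> closed_under C r) <->
   (forall r, R r -> valid E r -> minimal E R r -> closed_under C r)).
Proof.
move=> _ [d0 Cd0] [lE HlE] _ Hsub; split.
  by move=> H r Rr Vr _; apply: H.
move=> H.
suff key : forall k r, @meas _ D lE r < k -> R r -> valid E r -> closed_under C r.
  by move=> r; apply: (key (@meas _ D lE r).+1).
elim=> // k IH r Hk Rr Vr Hp.
have [Hm|Hm] := classic (minimal E R r); first by apply: H.
have Hf : feasible E r by exists d0; split; [apply: Hsub | apply: Hp].
have [r' [Rr' [Vr' Pe]]] : exists r', R r' /\ valid E r' /\ properly_extends E r r'.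
  by apply: NNPP => Hn; apply: Hm; split.
have Hlt := @meas_lt n D E lE HlE _ _ Pe.
case: Pe => [[Hc [_ Hs]] _].
rewrite /closed_under Hc; apply: (IH r') => //.
  by apply: leq_trans Hlt _; rewrite -ltnS.
by move=> d Cd; apply: Hs; [apply: Hsub | apply: Hp].
Qed.
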